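(* Let $a\ge2$, let $t\ge3$ be odd, and let $F=\breve F(a^t)$, where $a^t$ is the $t$-tuple $(a,\dots,a)$, with $n=\#F$. Then \[ \hat\chi\equiv\frac n2+a\Big(\sum_{p\text{ peak}}\chi_p-\sum_{v\text{ valley}}\chi_v\Big), \] where $\hat\chi=\sum_{q\in F}\hat\chi_q$ is the order ideal cardinality statistic.
   Context: A fence $\breve F(\alpha_1,\dots,\alpha_t)$ ($t\ge2$, positive integers, $\alpha_1,\alpha_t\ge2$) is the poset on $\{x_1,\dots,x_n\}$, $n=\alpha_1+\dots+\alpha_t-1$, with $a_i=\alpha_1+\dots+\alpha_i$, $a_0=0$, whose cover relations are: for $1\le j\le n-1$ with $a_{i-1}\le j<a_i$, $x_j\lessdot x_{j+1}$ if $i$ odd and $x_j\gtrdot x_{j+1}$ if $i$ even. The elements $x_{a_i}$, $i\in[t-1]$, are peaks (cover two elements, $i$ odd) or valleys (covered by two elements, $i$ even). $\mathcal J(F)$ is the set of order ideals. For $q\in F$, $I\in\mathcal J(F)$: $\hat\chi_q(I)=1$ if $q\in I$, else 0; $\chi_q(I)=1$ if $q\in\max(I)$, else 0; $T_q(I)=1$ if $q\in\min(F\setminus I)$, $-1$ if $q\in\max(I)$, $0$ otherwise. $f\equiv g$ means $f-g=\sum_{q\in F}c_qT_q$ for real constants $c_q$; real numbers denote constant functions. *)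

(* Defs.v *)
From HB Require Import structures.
From mathcomp Require Import all_boot all_order all_algebra.
From mathcomp Require Import reals.
Set Implicit Arguments. Unset Strict Implicit. Unset Printing Implicit Defensive.
Import Order.TTheory GRing.Theory Num.Theory.
Local Open Scope ring_scope.

(* Fence F(alpha_1,...,alpha_t), alpha given as a sequence al.
   Element x_j (1-based, j in 1..n) is represented by the ordinal j-1 : 'I_n. *)

Definition psum (al : seq nat) (i : nat) : nat := (\sum_(k < i) nth 0%N al k)%N.

Definition fence_n (al : seq nat) : nat := (sumn al).-1.

(* the i with a_{i-1} <= j < a_i *)
Definition fence_block (al : seq nat) (j : nat) : nat :=
  (count (fun k => psum al k <= j)%N (iota 1 (size al))).+1.

Definition fence_cover (al : seq nat) : rel 'I_(fence_n al) :=
  fun u v =>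
    ((u.+1 == v :> nat) && odd (fence_block al u.+1))
    || ((v.+1 == u :> nat) && ~~ odd (fence_block al v.+1)).

Definition fence_le (al : seq nat) (u v : 'I_(fence_n al)) : bool :=
  connect (@fence_cover al) u v.

Definition is_ideal (al : seq nat) (I : {set 'I_(fence_n al)}) : bool :=
  [forall u, forall v, ((v \in I) && fence_le u v) ==> (u \in I)].

Definition is_peak (al : seq nat) (q : 'I_(fence_n al)) : bool :=
  [exists i : 'I_(size al), [&& (0 < i)%N, odd i & (q.+1 == psum al i)%N]].
Definition is_valley (al : seq nat) (q : 'I_(fence_n al)) : bool :=
  [exists i : 'I_(size al), [&& (0 < i)%N, ~~ odd i & (q.+1 == psum al i)%N]].

Definition in_max (al : seq nat) (I : {set 'I_(fence_n al)}) (q : 'I_(fence_n al)) : bool :=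
  (q \in I) && [forall y, ((y \in I) && (y != q)) ==> ~~ fence_le q y].
Definition in_min_compl (al : seq nat) (I : {set 'I_(fence_n al)}) (q : 'I_(fence_n al)) : bool :=
  (q \notin I) && [forall y, ((y \notin I) && (y != q)) ==> ~~ fence_le y q].

Section Stats.
Variable R : realType.
Variable al : seq nat.

Definition chi_hat (q : 'I_(fence_n al)) (I : {set 'I_(fence_n al)}) : R :=
  if q \in I then 1 else 0.
Definition chi (q : 'I_(fence_n al)) (I : {set 'I_(fence_n al)}) : R :=
  if in_max I q then 1 else 0.
Definition toggle (q : 'I_(fence_n al)) (I : {set 'I_(fence_n al)}) : R :=
  if in_min_compl I q then 1 else if in_max I q then -1 else 0.

Definition toggle_equiv (f g : {set 'I_(fence_n al)} -> R) : Prop :=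
  exists c : 'I_(fence_n al) -> R,
    forall I, is_ideal I -> f I - g I = \sum_q c q * toggle q I.
End Stats.

(* Main.v *)
Require Import Defs.
From HB Require Import structures.
From mathcomp Require Import all_boot all_order all_algebra.
From mathcomp Require Import reals.
Import Order.TTheory GRing.Theory Num.Theory.
Local Open Scope ring_scope.
From mathcomp Require Import ring lra zify.
Set Implicit Arguments. Unset Strict Implicit. Unset Printing Implicit Defensive.
Local Close Scope ring_scope.

Section Gen.
Variable al : seq nat.
Local Notation N := 'I_(fence_n al).

Lemma cover_neq (u v : N) : fence_cover u v -> u != v.
Proof.
rewrite /fence_cover; apply: contraTneq => ->.
by rewrite !(gtn_eqF (ltnSn _)).
Qed.

Lemma ideal_cover (I : {set N}) u v : is_ideal I -> fence_cover u v -> v \in I -> u \in I.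
Proof.
move=> /forallP/(_ u)/forallP/(_ v)/implyP H c vI; apply: H.
by rewrite vI /fence_le connect1.
Qed.

Lemma ideal_le (I : {set N}) u v : is_ideal I -> fence_le u v -> v \in I -> u \in I.
Proof.
move=> /forallP/(_ u)/forallP/(_ v)/implyP H c vI; apply: H.
by rewrite vI c.
Qed.

Lemma in_max_char (I : {set N}) q : is_ideal I ->
  in_max I q = (q \in I) && [forall v, fence_cover q v ==> (v \notin I)].
Proof.
move=> idI; rewrite /in_max; case qI: (q \in I) => //=.
apply/forallP/forallP => H v.
- apply/implyP => cqv; apply/negP => vI.
  have := H v; rewrite vI /= eq_sym (cover_neq cqv) /= /fence_le.
  by rewrite connect1.
- apply/implyP => /andP[yI yq]; apply/negP => /connectP [p pth ep].
  case: p pth ep => [|w p] /=; first by move=> _ e; move: yq; rewrite e eqxx.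
  move=> /andP[cqw pth] ep.
  have wI : w \in I.
    apply: (ideal_le idI) yI; rewrite ep; apply/connectP; by exists p.
  by move: (H w); rewrite cqw wI.
Qed.

Lemma in_min_char (I : {set N}) q : is_ideal I ->
  in_min_compl I q = (q \notin I) && [forall u, fence_cover u q ==> (u \in I)].
Proof.
move=> idI; rewrite /in_min_compl; case qI: (q \in I) => //=.
apply/forallP/forallP => H u.
- apply/implyP => cuq; apply/negPn/negP => uI.
  have := H u; rewrite uI /= (cover_neq cuq) /= /fence_le.
  by rewrite connect1.
- apply/implyP => /andP[yI yq]; apply/negP => /connectP [p pth ep].
  move: pth ep; case/lastP: p => [|p w] /=; first by move=> _ e; move: yq; rewrite -e eqxx.
  rewrite rcons_path last_rcons => /andP[pth cwq] ew; rewrite -ew in cwq.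
  have wI := implyP (H _) cwq.
  move/negP: yI; apply; apply: (ideal_le idI) wI.
  by apply/connectP; exists p.
Qed.

End Gen.

Section NS.
Variables a t : nat.
Hypothesis ha : (0 < a)%N.
Local Notation al := (nseq t a).
Local Notation n := (fence_n al).
Local Notation N := 'I_n.

Lemma fn_nseq : n = (t * a).-1.
Proof. by rewrite /fence_n sumn_nseq mulnC. Qed.

Lemma psum_nseq k : (k <= t)%N -> psum al k = (k * a)%N.
Proof.
move=> kt; rewrite /psum (eq_bigr (fun _ => a)).
  by rewrite sum_nat_const card_ord.
by move=> i _; rewrite nth_nseq (leq_trans (ltn_ord i) kt).
Qed.

Lemma count_le m s : count (fun k => k <= m)%N (iota 1 s) = minn s m.
Proof.
elim: s => [|s IH]; first by rewrite /= min0n.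
rewrite -[s.+1]addn1 iotaD count_cat IH /=; lia.
Qed.

Lemma block_nseq j : (j < t * a)%N -> fence_block al j = (j %/ a).+1.
Proof.
move=> jt; rewrite /fence_block size_nseq.
rewrite (@eq_in_count _ _ (fun k => k <= j %/ a)%N); last first.
  move=> k; rewrite mem_iota => /andP[_ kt].
  by rewrite psum_nseq ?leq_divRL //; lia.
rewrite count_le; apply/eqP; rewrite eqSS; apply/eqP/minn_idPr.
by rewrite leq_eqVlt ltn_divLR // jt orbT.
Qed.

Hypothesis ht : odd t.

Lemma div_last : (t * a).-1 %/ a = t.-1.
Proof.
case: t ht => // t' _.
have -> : (t'.+1 * a).-1 = t' * a + a.-1 by rewrite mulSn; lia.
by rewrite divnMDl // divn_small ?addn0 //; lia.
Qed.

Lemma odd_last : odd ((t * a).-1 %/ a) = false.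
Proof. by rewrite div_last; case: t ht => //= t'; case: (odd t'). Qed.

Lemma ord_lt (u : N) : (u.+1 < t * a)%N.
Proof. have : (u < (t * a).-1)%N by rewrite -fn_nseq. lia. Qed.

Lemma cover_nseq (u v : N) : fence_cover u v =
  ((u.+1 == v :> nat) && ~~ odd (u.+1 %/ a)) || ((v.+1 == u :> nat) && odd (v.+1 %/ a)).
Proof.
by rewrite /fence_cover !block_nseq ?ord_lt //= negbK.
Qed.

Definition bI (I : {set N}) (k : nat) : bool :=
  if k is k'.+1 then [exists q : N, (val q == k') && (q \in I)] else true.

Lemma bI_ord (I : {set N}) (q : N) : bI I q.+1 = (q \in I).
Proof.
apply/existsP/idP => [[w /andP[/eqP/val_inj -> //]]|qI].
by exists q; rewrite eqxx.
Qed.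

Lemma upper_char (I : {set N}) (q : N) : [forall v, fence_cover q v ==> (v \notin I)] =
  (odd (q %/ a) ==> ~~ bI I q) && (~~ odd (q.+1 %/ a) ==> ~~ bI I q.+2).
Proof.
apply/forallP/andP => [H|[H1 H2] v].
- split; apply/implyP => hp; apply/negP.
  + case E: (nat_of_ord q) hp => [|k]; first by rewrite div0n.
    move=> hp /existsP[w /andP[/eqP wk wI]].
    by have := H w; rewrite cover_nseq wk E eqxx hp orbT wI.
  + move=> /existsP[w /andP[/eqP wk wI]].
    by have := H w; rewrite cover_nseq wk eqxx hp wI.
- rewrite cover_nseq; apply/implyP => /orP[] /andP[/eqP e hp].
  + by move: hp; rewrite -bI_ord -e => hp; apply: (implyP H2 hp).
  + by move: hp; rewrite -bI_ord e => hp; apply: (implyP H1 hp).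
Qed.

Lemma lower_char (I : {set N}) (q : N) : [forall u, fence_cover u q ==> (u \in I)] =
  (~~ odd (q %/ a) ==> bI I q) && (odd (q.+1 %/ a) ==> bI I q.+2).
Proof.
apply/forallP/andP => [H|[H1 H2] v].
- split; apply/implyP => hp.
  + case E: (nat_of_ord q) hp => [|k] //.
    move=> hp; apply/existsP.
    have kn : (k < n)%N by have := ltn_ord q; rewrite E; lia.
    exists (Ordinal kn); rewrite eqxx /=.
    by have := H (Ordinal kn); rewrite cover_nseq /= E eqxx hp.
  + have kn : (q.+1 < n)%N.
      suff : (q.+1 < (t * a).-1)%N by rewrite -fn_nseq.
      have qn : (q < (t * a).-1)%N by rewrite -fn_nseq.
      case: (ltngtP q.+1 (t * a).-1) => // [h|e]; first lia.
      by move: hp; rewrite e odd_last.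
    apply/existsP; exists (Ordinal kn); rewrite eqxx /=.
    by have := H (Ordinal kn); rewrite cover_nseq /= eqxx hp orbT.
- rewrite cover_nseq; apply/implyP => /orP[] /andP[/eqP e hp].
  + by move: hp; rewrite -bI_ord e => hp; apply: (implyP H1 hp).
  + by move: hp; rewrite -bI_ord -e => hp; apply: (implyP H2 hp).
Qed.

Lemma bI_out (I : {set N}) k : (n <= k)%N -> bI I k.+1 = false.
Proof.
move=> nk; apply/existsP => [[w /andP[/eqP wk _]]].
by have := ltn_ord w; rewrite wk; lia.
Qed.

Lemma max_eq (I : {set N}) q : is_ideal I -> in_max I q =
  [&& bI I q.+1, (odd (q %/ a) ==> ~~ bI I q) & (~~ odd (q.+1 %/ a) ==> ~~ bI I q.+2)].
Proof. by move=> idI; rewrite in_max_char // upper_char bI_ord. Qed.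

Lemma min_eq (I : {set N}) q : is_ideal I -> in_min_compl I q =
  [&& ~~ bI I q.+1, (~~ odd (q %/ a) ==> bI I q) & (odd (q.+1 %/ a) ==> bI I q.+2)].
Proof. by move=> idI; rewrite in_min_char // lower_char bI_ord. Qed.

Lemma eR_eq k : odd (k.+1 %/ a) = (a %| k.+1) (+) odd (k %/ a).
Proof. by rewrite divnS // oddD oddb. Qed.

Lemma peak_eq (q : N) : is_peak q = ~~ odd (q %/ a) && (a %| q.+1).
Proof.
apply/existsP/idP => [[i /and3P[i0 oi /eqP e]]|/andP[h1 h2]].
  rewrite psum_nseq in e; last by move: (nat_of_ord i) (ltn_ord i) => k; rewrite size_nseq => /ltnW.
  case: (nat_of_ord i) e i0 oi => // i' e _ oi.
  have -> : nat_of_ord q = (i' * a + a.-1)%N by rewrite mulSn in e; lia.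
  rewrite divnMDl // (divn_small (m := a.-1)) ?addn0; last lia.
  have -> : (i' * a + a.-1).+1 = i'.+1 * a by rewrite mulSn; lia.
  rewrite dvdn_mull // andbT.
  by move: oi => /=.
have qt := ord_lt q.
have ilt : (q.+1 %/ a < size (nseq t a))%N by rewrite size_nseq ltn_divLR.
exists (Ordinal ilt); rewrite /= psum_nseq ?divnK //; last by apply: ltnW; rewrite ltn_divLR.
rewrite eqxx andbT eR_eq h2 /= h1 andbT divn_gt0 //.
by apply: dvdn_leq.
Qed.

Lemma valley_eq (q : N) : is_valley q = odd (q %/ a) && (a %| q.+1).
Proof.
apply/existsP/idP => [[i /and3P[i0 oi /eqP e]]|/andP[h1 h2]].
  rewrite psum_nseq in e; last by move: (nat_of_ord i) (ltn_ord i) => k; rewrite size_nseq => /ltnW.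
  case: (nat_of_ord i) e i0 oi => // i' e _ oi.
  have -> : nat_of_ord q = (i' * a + a.-1)%N by rewrite mulSn in e; lia.
  rewrite divnMDl // (divn_small (m := a.-1)) ?addn0; last lia.
  have -> : (i' * a + a.-1).+1 = i'.+1 * a by rewrite mulSn; lia.
  rewrite dvdn_mull // andbT.
  by move: oi => /= /negbNE.
have qt := ord_lt q.
have ilt : (q.+1 %/ a < size (nseq t a))%N by rewrite size_nseq ltn_divLR.
exists (Ordinal ilt); rewrite /= psum_nseq ?divnK //; last by apply: ltnW; rewrite ltn_divLR.
rewrite eqxx andbT eR_eq h2 /= h1 andbT divn_gt0 //.
by apply: dvdn_leq.
Qed.

Section Cons.
Variable I : {set N}.
Hypothesis idI : is_ideal I.
Variable q : N.

Lemma cons1 : ~~ odd (q %/ a) -> bI I q.+1 -> bI I q.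
Proof.
rewrite bI_ord; case E: (nat_of_ord q) => [|k] // hp qI.
have kn : (k < n)%N by have := ltn_ord q; rewrite E; lia.
rewrite (_ : k.+1 = (Ordinal kn).+1) // bI_ord; apply: (ideal_cover idI) qI.
by rewrite cover_nseq /= E eqxx hp.
Qed.

Lemma cons2 : odd (q %/ a) -> bI I q -> bI I q.+1.
Proof.
rewrite bI_ord; case E: (nat_of_ord q) => [|k] //; first by rewrite div0n.
move=> hp; have kn : (k < n)%N by have := ltn_ord q; rewrite E; lia.
rewrite (_ : k.+1 = (Ordinal kn).+1) // bI_ord => wI; apply: (ideal_cover idI) wI.
by rewrite cover_nseq /= E eqxx hp orbT.
Qed.

Lemma cons3 : ~~ odd (q.+1 %/ a) -> bI I q.+2 -> bI I q.+1.
Proof.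
case: (ltnP q.+1 n) => [kn|kn]; last by rewrite bI_out.
move=> hp; rewrite (_ : q.+2 = (Ordinal kn).+1) // !bI_ord => wI.
apply: (ideal_cover idI) wI.
by rewrite cover_nseq /= eqxx hp.
Qed.

Lemma cons4 : odd (q.+1 %/ a) -> bI I q.+1 -> bI I q.+2.
Proof.
case: (ltnP q.+1 n) => [kn|kn]; last first.
  have e : q.+1 = (t * a).-1.
    move: (nat_of_ord q) kn (ltn_ord q) => k; rewrite fn_nseq; lia.
  by rewrite e odd_last.
move=> hp; rewrite (_ : q.+2 = (Ordinal kn).+1) // !bI_ord => qI.
apply: (ideal_cover idI) qI.
by rewrite cover_nseq /= eqxx hp orbT.
Qed.
End Cons.

End NS.

Local Open Scope ring_scope.

Section Alg.
Variable R : realFieldType.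

Lemma local_id (e A b0 b1 b2 : bool) (a d : R) :
 (A -> d = 0) -> (~~e -> b1 -> b0) -> (e -> b0 -> b1) ->
 (~~(A (+) e) -> b2 -> b1) -> (A (+) e -> b1 -> b2) ->
 let eR := A (+) e in
 let minb := [&& ~~b1, (~~e ==> b0) & (eR ==> b2)] in
 let maxb := [&& b1, (e ==> ~~b0) & (~~eR ==> ~~b2)] in
 let Tg : R := if minb then 1 else if maxb then -1 else 0 in
 let Ch : R := if maxb then 1 else 0 in
 b1%:R - a * ((if ~~e && A then Ch else 0) - (if e && A then Ch else 0))
   - (d - a * (e && A)%:R) * Tg
 = b1%:R * (1 - a * A%:R) - d * (b0%:R - 2 * b1%:R + b2%:R) + a * (e && A)%:R.
Proof.
move=> hd h1 h2 h3 h4 /=.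
case: A hd h3 h4 => [hd|_] h3 h4; first rewrite hd //;
move: h1 h2 h3 h4; case: e; case: b0; case: b1; case: b2 => //= H1 H2 H3 H4;
first [ring | by move: (H1 isT isT) | by move: (H2 isT isT) | by move: (H3 isT isT) | by move: (H4 isT isT)].
Qed.

Lemma byparts (f g : nat -> R) m :
  \sum_(k < m) g k.+1 * (f k - 2 * f k.+1 + f k.+2) =
  \sum_(k < m) f k.+1 * (g k - 2 * g k.+1 + g k.+2)
  + g 1%N * f 0%N - g 0%N * f 1%N + g m * f m.+1 - g m.+1 * f m.
Proof.
elim: m => [|m IH]; first by rewrite !big_ord0; ring.
rewrite !big_ord_recr /= IH; ring.
Qed.

Definition dd (a : nat) (j : nat) : R :=
  ((j %% a)%:R * ((j %% a)%:R - a%:R)) / 2.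

Lemma modS_full (k a : nat) : (0 < a)%N -> (a %| k.+1)%N -> (k %% a).+1 = a.
Proof.
move=> ha h; have sa : (k %% a < a)%N by rewrite ltn_mod.
have e : ((k %% a + 1) %% a = (k + 1) %% a)%N by rewrite modnDml.
move: sa; rewrite leq_eqVlt => /orP[/eqP //|lt].
move: e; rewrite modn_small ?addn1 //; move/eqP: h => -> //.
Qed.

Ltac fld := field; rewrite ?pnatr_eq0 //.

Lemma dd_diff (a k : nat) : (2 <= a)%N ->
  dd a k - 2 * dd a k.+1 + dd a k.+2 = 1 - a%:R * (a %| k.+1)%:R.
Proof.
move=> ha; rewrite /dd (modnS k.+1) modnS.
have a0 : (0 < a)%N by lia.
case: (boolP (a %| k.+1)%N) => h1.
- have h2 : ~~ (a %| k.+2)%N.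
    apply/negP => h2; have := dvdn_sub h2 h1; rewrite subSn // subnn.
    by rewrite dvdn1; lia.
  rewrite (negPf h2) /= ?mod0n.
  move: (modS_full a0 h1); move: (k %% a)%N => s <-.
  rewrite -!natr1; fld.
have -> : (false%:R : R) = 0 by []. rewrite mulr0 subr0.
case: (boolP (a %| k.+2)%N) => h2.
- have e := modS_full a0 h2; rewrite modnS (negPf h1) in e.
  move: e; move: (k %% a)%N => s <-; rewrite -!natr1; fld.
- rewrite -!natr1; fld.
Qed.
End Alg.

Ltac fld := field; rewrite ?pnatr_eq0 //.

Lemma tele_eq (R : realFieldType) m (u : 'I_m -> R) (f : nat -> R) :
  (forall k : 'I_m, u k = f k.+1 - f k) -> \sum_(k < m) u k = f m - f 0%N.
Proof.
move=> H; rewrite (eq_bigr _ (fun k _ => H k)).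
elim: m {u H} => [|m IH]; first by rewrite big_ord0 subrr.
rewrite big_ord_recr /= IH; ring.
Qed.

Theorem theorem5p3 (R : realType) (a t : nat) :
  (2 <= a)%N -> (3 <= t)%N -> odd t ->
  @toggle_equiv R (nseq t a)
    (fun I => \sum_q chi_hat R q I)
    (fun I => (fence_n (nseq t a))%:R / 2
       + a%:R * (\sum_(p | is_peak p) chi R p I - \sum_(v | is_valley v) chi R v I)).
Proof.
move=> ha ht3 hto.
have a0 : (0 < a)%N by lia.
pose c := fun q : 'I_(fence_n (nseq t a)) =>
  @dd R a q.+1 - a%:R * (odd (q %/ a)%N && (a %| q.+1)%N)%:R.
exists c => I idI.
have key : \sum_q (chi_hat R q I
   - a%:R * ((if is_peak q then chi R q I else 0) - (if is_valley q then chi R q I else 0))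
   - c q * toggle R q I) = (fence_n (nseq t a))%:R / 2.
  rewrite (eq_bigr (fun q : 'I_(fence_n (nseq t a)) => (bI I q.+1)%:R * (1 - a%:R * (a %| q.+1)%N%:R)
      - @dd R a q.+1 * ((bI I q)%:R - 2 * (bI I q.+1)%:R + (bI I q.+2)%:R)
      + a%:R * (odd (q %/ a)%N && (a %| q.+1)%N)%:R)); last first.
    move=> q _.
    rewrite /chi_hat (_ : (if q \in I then 1 else 0) = (bI I q.+1)%:R :> R); last first.
      by rewrite bI_ord; case: (q \in I).
    rewrite /chi /toggle /c (max_eq a0 hto _ idI) (min_eq a0 hto _ idI) (peak_eq a0 hto) (valley_eq a0 hto) (eR_eq a0).
    apply: local_id.
    - by move=> h; rewrite /dd (eqP h) mul0r mul0r.
    - exact: (cons1 a0 hto idI).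
    - exact: (cons2 a0 hto idI).
    - by rewrite -(eR_eq a0); apply: (cons3 a0 hto idI).
    - by rewrite -(eR_eq a0); apply: (cons4 a0 hto idI).
  rewrite big_split sumrB /=.
  have bp := byparts (fun k => (bI I k)%:R : R) (@dd R a) (fence_n (nseq t a)).
  cbv beta in bp.
  rewrite [in RHS](eq_bigr (fun q : 'I_(fence_n (nseq t a)) => (bI I q.+1)%:R * (1 - a%:R * (a %| q.+1)%N%:R))) in bp; last first.
    by move=> q _; rewrite dd_diff.
  rewrite bp; clear bp.
  have d0 : @dd R a 0 = 0 by rewrite /dd mod0n mul0r mul0r.
  have tpos : (0 < t * a)%N by rewrite muln_gt0 a0; lia.
  have dn : @dd R a (fence_n (nseq t a)).+1 = 0.
    by rewrite /dd fn_nseq prednK // modnMl mul0r mul0r.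
  have d1 : @dd R a 1 = (1 - a%:R) / 2 by rewrite /dd modn_small // mul1r.
  have bn : bI I (fence_n (nseq t a)).+1 = false := bI_out a0 hto I (leqnn _).
  rewrite d0 dn d1 bn /=.
  have S3 : \sum_(q < fence_n (nseq t a)) a%:R * (odd (q %/ a)%N && (a %| q.+1)%N)%:R
      = a%:R * (t.-1)%:R / 2 :> R.
    rewrite -mulr_sumr (@tele_eq _ _ _ (fun k => ((k %/ a)%:R - (odd (k %/ a))%:R) / 2)); last first.
      move=> k; rewrite (eR_eq a0) divnS // natrD.
      by case: (a %| k.+1)%N; case: (odd (k %/ a)%N) => /=; fld.
    rewrite fn_nseq (odd_last a0 hto) (div_last a0 hto) div0n /=; fld.
  rewrite S3.
  have e1 : (t.-1)%:R = t%:R - 1 :> R by rewrite -(prednK (ltnW (ltnW ht3))) -natr1 addrK.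
  have e2 : (fence_n (nseq t a))%:R = t%:R * a%:R - 1 :> R by rewrite fn_nseq -natrM -(prednK tpos) -natr1 addrK.
  rewrite e1 e2; fld.
rewrite (big_mkcond (fun p => is_peak p)) (big_mkcond (fun v => is_valley v)) -sumrB mulr_sumr -key !sumrB.
ring.
Qed.
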